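(* Let $\mathcal{G}=(V,\emptyset,B)$ be a connected bidirected graph with $V=\{1,\dots,p\}$, and let $q\in\mathbb{R}^p$ be a vector with all entries nonzero. Then there exists $\Sigma\in PD(\mathcal{G})$ such that the vector $\Sigma q$ has precisely one nonzero entry.
   Context: $B$ is a set of 2-element subsets of $V$ (bidirected edges); $\mathcal{G}$ is connected if any two vertices are joined by a path of such edges. $PD(\mathcal{G})$ is the set of positive definite $p\times p$ matrices $\Sigma=(\sigma_{ij})$ with $\sigma_{ij}=0$ whenever $i\ne j$ and $\{i,j\}\notin B$. *)

(* Defs.v *)
From HB Require Import structures.
From mathcomp Require Import all_boot all_order all_algebra.
Set Implicit Arguments. Unset Strict Implicit. Unset Printing Implicit Defensive.
Import Order.TTheory GRing.Theory Num.Theory.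
Local Open Scope ring_scope.

(* A bidirected graph on V = 'I_p (vertices 0..p-1 stand for 1..p) is given by
   its edge relation B : rel 'I_p; {i,j} \in B is encoded as B i j (= B j i). *)
Definition bidirected_graph (p : nat) (B : rel 'I_p) : Prop :=
  symmetric B /\ irreflexive B.

Definition graph_connected (p : nat) (B : rel 'I_p) : Prop :=
  forall i j : 'I_p, connect B i j.

Definition posdef (R : realFieldType) (p : nat) (S : 'M[R]_p) : Prop :=
  S^T = S /\ forall x : 'cV[R]_p, x != 0 -> 0 < (x^T *m S *m x) 0 0.

Definition PD_G (R : realFieldType) (p : nat) (B : rel 'I_p) (S : 'M[R]_p) : Prop :=
  posdef S /\ forall i j : 'I_p, i != j -> ~~ B i j -> S i j = 0.

(* Main.v *)
Require Import Defs.
From HB Require Import structures.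
From mathcomp Require Import all_boot all_order all_algebra.
Set Implicit Arguments. Unset Strict Implicit. Unset Printing Implicit Defensive.
Import Order.TTheory GRing.Theory Num.Theory.
Local Open Scope ring_scope.

Fixpoint reach (p : nat) (B : rel 'I_p) (r : 'I_p) (n : nat) : {set 'I_p} :=
  match n with
  | 0 => [set r]
  | n.+1 => reach B r n :|: [set v | [exists u in reach B r n, B u v]]
  end.

Lemma reach_path p (B : rel 'I_p) r s : forall x n, path B x s -> x \in reach B r n ->
  last x s \in reach B r (n + size s).
Proof.
elim: s => [|y s IH] x n /=; first by rewrite addn0.
move=> /andP [Bxy ps] xin.
rewrite -addSnnS; apply: IH => //=.
apply/setUP; right; rewrite inE; apply/existsP; exists x; by rewrite xin Bxy.
Qed.

Lemma tree_exists p (B : rel 'I_p) (hp : (0 < p)%N) (hconn : graph_connected B) :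
  exists r : 'I_p, exists par : 'I_p -> 'I_p, exists depth : 'I_p -> nat,
    forall v, v != r -> B (par v) v && (depth (par v) < depth v)%N.
Proof.
pose r := Ordinal hp.
have hex : forall v, exists n, v \in reach B r n.
  move=> v; have /connectP [s ps ->] := hconn r v.
  exists (0 + size s)%N; apply: reach_path => //=; by rewrite inE.
pose depth v := ex_minn (hex v).
have dP : forall v, (v \in reach B r (depth v)) /\ forall n, v \in reach B r n -> (depth v <= n)%N.
  by move=> v; rewrite /depth; case: ex_minnP.
have exu : forall v, v != r -> exists u, B u v && (depth u < depth v)%N.
  move=> v vr; have [vin vmin] := dP v.
  move: vin (vmin); case: (depth v) => [|d] /=.
    by rewrite inE (negbTE vr).
  move=> /setUP [vin' vm|].
    by have := vm _ vin'; rewrite ltnn.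
  rewrite inE => /existsP [u /andP [uin Buv]] _.
  exists u; rewrite Buv /=; have := (dP u).2 _ uin; by rewrite ltnS.
exists r, (fun v => odflt v [pick u | B u v && (depth u < depth v)%N]), depth.
move=> v vr; case: pickP => [u //|H].
have [u Hu] := exu v vr; by rewrite H in Hu.
Qed.
Section C.
Variables (R : rcfType) (p : nat) (q : 'cV[R]_p) (par : 'I_p -> 'I_p).
Definition avec (v : 'I_p) : 'cV[R]_p :=
  q (par v) 0 *: delta_mx v 0 - q v 0 *: delta_mx (par v) 0.

Lemma avecE v i : avec v i 0 = q (par v) 0 * (i == v)%:R - q v 0 * (i == par v)%:R.
Proof. by rewrite !mxE !eqxx !andbT. Qed.

Lemma uTx (u x : 'cV[R]_p) : (u^T *m x) 0 0 = \sum_k u k 0 * x k 0.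
Proof. by rewrite mxE; apply: eq_bigr => k _; rewrite mxE. Qed.

Lemma aTx v (x : 'cV[R]_p) : ((avec v)^T *m x) 0 0 = q (par v) 0 * x v 0 - q v 0 * x (par v) 0.
Proof.
rewrite uTx; under eq_bigr => k _ do rewrite avecE mulrBl.
rewrite sumrB; congr (_ - _).
  rewrite (bigD1 v) //= eqxx mulr1 big1 ?addr0 // => k /negbTE ->; by rewrite mulr0 mul0r.
rewrite (bigD1 (par v)) //= eqxx mulr1 big1 ?addr0 // => k /negbTE ->; by rewrite mulr0 mul0r.
Qed.

Lemma quad (u x : 'cV[R]_p) : (x^T *m (u *m u^T) *m x) 0 0 = ((u^T *m x) 0 0) ^+ 2.
Proof.
have -> : x^T *m (u *m u^T) *m x = (u^T *m x)^T *m (u^T *m x).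
  by rewrite trmx_mul trmxK !mulmxA.
by rewrite mxE big_ord1 mxE expr2.
Qed.

Lemma outerE (u : 'cV[R]_p) i j : (u *m u^T) i j = u i 0 * u j 0.
Proof. by rewrite mxE big_ord1 mxE. Qed.
End C.
Lemma construct (R : rcfType) (p : nat) (B : rel 'I_p) (hsym : symmetric B)
  (r : 'I_p) (par : 'I_p -> 'I_p) (depth : 'I_p -> nat)
  (hpar : forall v, v != r -> B (par v) v && (depth (par v) < depth v)%N)
  (q : 'cV[R]_p) (hq : forall i : 'I_p, q i 0 != 0) :
  exists S : 'M[R]_p, PD_G B S /\
    exists i : 'I_p, (S *m q) i 0 != 0 /\
      forall j : 'I_p, j != i -> (S *m q) j 0 = 0.
Proof.
pose e : 'cV[R]_p := delta_mx r 0.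
pose a := avec q par.
pose S := e *m e^T + \sum_(v | v != r) a v *m (a v)^T.
exists S; split; [split; [split|]|].
- rewrite /S linearD /= trmx_mul trmxK linear_sum /=; congr (_ + _).
  by apply: eq_bigr => v _; rewrite trmx_mul trmxK.
- move=> x x0; rewrite /S mulmxDr mulmxDl mxE quad.
  rewrite mulmx_sumr mulmx_suml summxE.
  under eq_bigr => v _ do rewrite quad aTx.
  rewrite lt_def; apply/andP; split; last first.
    by apply: addr_ge0; [exact: sqr_ge0 | apply: sumr_ge0 => v _; exact: sqr_ge0].
  apply: contra x0 => /eqP H.
  have Hs := H; move: H => /eqP; rewrite paddr_eq0 ?sqr_ge0 ?sumr_ge0 // => [|v _]; last exact: sqr_ge0.
  move=> /andP [/eqP hr /eqP hs].
  have hr' : x r 0 = 0.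
    move/eqP: hr; rewrite sqrf_eq0 uTx (bigD1 r) //= !mxE eqxx mul1r big1 ?addr0; first by move/eqP.
    by move=> k kr; rewrite !mxE (negbTE kr) mul0r.
  have hv : forall v, v != r -> q (par v) 0 * x v 0 = q v 0 * x (par v) 0.
    move=> v vr; move/psumr_eq0P: hs => /(_ (fun _ _ => sqr_ge0 _) v vr) /eqP.
    by rewrite sqrf_eq0 subr_eq0 => /eqP.
  have hx0 : forall n v, (depth v <= n)%N -> x v 0 = 0.
    elim=> [|n IH] v.
      rewrite leqn0 => /eqP dv; case: (eqVneq v r) => [-> |vr].
        by [].
      by have := hpar v vr; rewrite dv ltn0 andbF.
    move=> dv; case: (eqVneq v r) => [-> |vr].
      by [].
    have /andP [_ dl] := hpar v vr.
    have := hv v vr; rewrite (IH (par v)) ?mulr0; last by rewrite -ltnS; apply: leq_trans dl dv.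
    by move/eqP; rewrite mulf_eq0 (negbTE (hq _)) /= => /eqP.
  apply/eqP/matrixP => i j; rewrite ord1 mxE; exact: hx0 _ i (leqnn _).
- move=> i j ij nB; rewrite /S mxE outerE !mxE.
  rewrite !eqxx !andbT.
  have -> : (i == r)%:R * (j == r)%:R = 0 :> R.
    case: (i =P r) ij => [-> ij | _ _]; last by rewrite mul0r.
    by case: (j =P r) ij => [-> | _]; [rewrite eqxx | rewrite mulr0].
  rewrite add0r summxE.
  apply: big1 => v vr; rewrite outerE !avecE.
  idtac.
  have /andP [Bv _] := hpar v vr.
  case: (eqVneq i v) => [iv|iv]; case: (eqVneq i (par v)) => [ip|ip];
   case: (eqVneq j v) => [jv|jv]; case: (eqVneq j (par v)) => [jp|jp];
   rewrite /= ?mulr0 ?mulr1 ?subr0 ?sub0r ?mul0r ?mulr0 //.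
  all: try by move: ij; rewrite iv jv eqxx.
  all: try by move: ij; rewrite ip jp eqxx.
  all: try by move: nB; rewrite iv jp hsym Bv.
  all: try by move: nB; rewrite ip jv Bv.
- exists r; rewrite /S mulmxDl -mulmxA mulmx_suml.
  have -> : \sum_(v | v != r) a v *m (a v)^T *m q = 0.
    apply: big1 => v _; rewrite -mulmxA.
    have -> : (a v)^T *m q = 0.
      by apply/matrixP => i j; rewrite !ord1 aTx !mxE mulrC subrr.
    by rewrite mulmx0.
  rewrite addr0; split.
    rewrite mxE big_ord1 !mxE eqxx /= mul1r.
    rewrite (bigD1 r) //= !mxE eqxx mul1r big1 ?addr0 ?hq // => k kr.
    by rewrite !mxE eq_sym eq_sym (negbTE kr) mul0r.
  move=> j jr; rewrite mxE big_ord1 !mxE (negbTE jr) /= mul0r //.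
Qed.

Theorem lemma7 (R : rcfType) (p : nat) (B : rel 'I_p) (hp : (0 < p)%N)
  (hB : bidirected_graph B) (hconn : graph_connected B)
  (q : 'cV[R]_p) (hq : forall i : 'I_p, q i 0 != 0) :
  exists S : 'M[R]_p, PD_G B S /\
    exists i : 'I_p, (S *m q) i 0 != 0 /\
      forall j : 'I_p, j != i -> (S *m q) j 0 = 0.
Proof.
have [r [par [depth H]]] := tree_exists hp hconn.
exact: (construct hB.1 H hq).
Qed.
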